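(* Let $X$ be a Banach space with a Schauder basis, $k\in\mathbb{N}$, $(x_s)_{s\in[\mathbb{N}]^k}$ a $k$-sequence in $X$ and $(\varepsilon_n)_n$ a null sequence of positive reals. Assume that for some infinite $M\subseteq\mathbb{N}$, $(x_s)_{s\in[M]^k}$ is subordinated with respect to the weak topology of $X$, and let $x_0$ be its weak limit (i.e. $x_0=\widehat\varphi(\emptyset)$ for the witnessing map $\widehat\varphi$). Then there exist an infinite $L\subseteq M$ and a family $(\widetilde x_s)_{s\in[L]^k}$ in $X$ such that: (i) $(\widetilde x_s)_{s\in[L]^k}$ admits a canonical tree decomposition $(y_t)_{t\in[L]^{\le k}}$ with $y_\emptyset=x_0$; (ii) for every $s\in[L]^k$, $\|x_s-\widetilde x_s\|<\varepsilon_n$, where $n$ is such that $\min s=L(n)$; (iii) $(\widetilde x_s)_{s\in[L]^k}$ is subordinated with respect to the weak topology of $X$, with weak limit $x_0$.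
   Context: $[M]^k$ (resp. $[M]^{\le k}$) is the set of subsets of $M$ of size $k$ (resp. at most $k$), each identified with its increasing enumeration; $L(n)$ is the $n$-th element of $L$; for $s\in[\mathbb{N}]^k$ and $j\le k$, $s|j=\{s(1),\dots,s(j)\}$ ($s|0=\emptyset$). $[M]^{\le k}$ carries the topology induced by identifying subsets of $\mathbb{N}$ with points of $\{0,1\}^{\mathbb{N}}$ (a compact metric space). A $k$-sequence $(x_s)_{s\in[M]^k}$ is subordinated (w.r.t. the weak topology) if there is a continuous $\widehat\varphi:[M]^{\le k}\to(X,w)$ with $\widehat\varphi(s)=x_s$ for all $s\in[M]^k$; then $(x_s)_{s\in[M]^k}$ converges weakly to $\widehat\varphi(\emptyset)$, meaning that for every weak neighbourhood $U$ of $\widehat\varphi(\emptyset)$ there is $m$ with $x_s\in U$ whenever $s\in[M]^k$, $s(1)\ge M(m)$. A pair $(s_1,s_2)$ in $[L]^k$ is a plegma pair if $s_1(i)<s_2(i)$ for all $i\le k$ and $s_2(i)<s_1(i+1)$ for all $i<k$. Supports are with respect to the Schauder basis; for sets $A<B$ means $\max A<\min B$. A family $(y_t)_{t\in[L]^{\le k}}$ is a canonical tree decomposition of $(x_s)_{s\in[L]^k}$ if: (i) $x_s=\sum_{j=0}^k y_{s|j}$ for every $s\in[L]^k$; (ii) $\mathrm{supp}(y_t)$ is finite for $t\ne\emptyset$; (iii) $\mathrm{supp}(y_{s|j_1})<\mathrm{supp}(y_{s|j_2})$ for all $s\in[L]^k$ and $1\le j_1<j_2\le k$; (iv) $\mathrm{supp}(y_{s_1|j_1})<\mathrm{supp}(y_{s_2|j_2})$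 for every plegma pair $(s_1,s_2)$ in $[L]^k$ and $1\le j_1\le j_2\le k$; (v) $\mathrm{supp}(y_{s_2|j_1})<\mathrm{supp}(y_{s_1|j_2})$ for every plegma pair $(s_1,s_2)$ in $[L]^k$ and $1\le j_1<j_2\le k$. *)

(* Defs.v *)
From Stdlib Require Import Reals List.
Import ListNotations.
Open Scope R_scope.

Record Banach := {
  carrier :> Type;
  vadd : carrier -> carrier -> carrier;
  vzero : carrier;
  vopp : carrier -> carrier;
  vscal : R -> carrier -> carrier;
  vnorm : carrier -> R;
  vadd_assoc : forall u v w, vadd u (vadd v w) = vadd (vadd u v) w;
  vadd_comm : forall u v, vadd u v = vadd v u;
  vadd_0l : forall u, vadd vzero u = u;
  vadd_oppr : forall u, vadd u (vopp u) = vzero;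
  vscal_1 : forall u, vscal 1 u = u;
  vscal_assoc : forall a b u, vscal a (vscal b u) = vscal (a * b) u;
  vscal_addr : forall a u v, vscal a (vadd u v) = vadd (vscal a u) (vscal a v);
  vscal_addl : forall a b u, vscal (a + b) u = vadd (vscal a u) (vscal b u);
  vnorm_eq0 : forall u, vnorm u = 0 -> u = vzero;
  vnorm_0 : vnorm vzero = 0;
  vnorm_scal : forall a u, vnorm (vscal a u) = Rabs a * vnorm u;
  vnorm_triangle : forall u v, vnorm (vadd u v) <= vnorm u + vnorm v;
  complete : forall u : nat -> carrier,
    (forall eps, 0 < eps -> exists N, forall m n, (N <= m)%nat -> (N <= n)%nat ->
        vnorm (vadd (u m) (vopp (u n))) < eps) ->
    exists l, forall eps, 0 < eps -> exists N, forall n, (N <= n)%nat ->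
        vnorm (vadd (u n) (vopp l)) < eps
}.

Arguments vadd {_}. Arguments vzero {_}. Arguments vopp {_}.
Arguments vscal {_}. Arguments vnorm {_}.

Definition vsub {X : Banach} (u v : X) : X := vadd u (vopp v).
Definition vsum {X : Banach} (l : list X) : X := fold_right vadd vzero l.

Definition expands {X : Banach} (e : nat -> X) (a : nat -> R) (x : X) : Prop :=
  forall eps, 0 < eps -> exists N, forall n, (N <= n)%nat ->
    vnorm (vsub (vsum (map (fun i => vscal (a i) (e i)) (seq 0 n))) x) < eps.

Definition schauder_basis {X : Banach} (e : nat -> X) : Prop :=
  (forall x : X, exists a, expands e a x) /\
  (forall (x : X) a b, expands e a x -> expands e b x -> forall n, a n = b n).

Definition in_supp {X : Banach} (e : nat -> X) (v : X) (n : nat) : Prop :=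
  exists a, expands e a v /\ a n <> 0.

Definition finite_supp {X : Banach} (e : nat -> X) (v : X) : Prop :=
  exists N, forall n, in_supp e v n -> (n < N)%nat.

(* supp u < supp v : max supp u < min supp v (vacuous if one is empty) *)
Definition supp_lt {X : Banach} (e : nat -> X) (u v : X) : Prop :=
  forall m n, in_supp e u m -> in_supp e v n -> (m < n)%nat.

Definition bounded_linear {X : Banach} (f : X -> R) : Prop :=
  (forall u v : X, f (vadd u v) = f u + f v) /\
  (forall a (u : X), f (vscal a u) = a * f u) /\
  (exists C, forall u : X, Rabs (f u) <= C * vnorm u).

Definition weak_open {X : Banach} (U : X -> Prop) : Prop :=
  forall z, U z -> exists fs : list (X -> R),
    Forall bounded_linear fs /\
    exists delta, 0 < delta /\
      forall w, (forall f, In f fs -> Rabs (f w - f z) < delta) -> U w.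

(* An infinite subset L of N is given by its increasing enumeration:
   L n is the n-th element of L (counting from 0). *)
Definition infinite_enum (L : nat -> nat) : Prop := forall n, (L n < L (S n))%nat.

Definition memb (L : nat -> nat) (a : nat) : Prop := exists m, L m = a.

(* finite subsets of N are identified with their increasing enumeration *)
Definition increasing (s : list nat) : Prop :=
  forall i, (S i < length s)%nat -> (nth i s 0 < nth (S i) s 0)%nat.

Definition in_subsets_eq (L : nat -> nat) (k : nat) (s : list nat) : Prop :=
  length s = k /\ increasing s /\ forall a, In a s -> memb L a.

Definition in_subsets_le (L : nat -> nat) (k : nat) (s : list nat) : Prop :=
  (length s <= k)%nat /\ increasing s /\ forall a, In a s -> memb L a.

Definition restr (s : list nat) (j : nat) : list nat := firstn j s.

(* topology of {0,1}^N: t and t' agree on {0,...,N-1} *)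
Definition agree_below (N : nat) (t t' : list nat) : Prop :=
  forall n, (n < N)%nat -> (In n t <-> In n t').

Definition weak_continuous_on {X : Banach} (M : nat -> nat) (k : nat)
  (phi : list nat -> X) : Prop :=
  forall t, in_subsets_le M k t ->
    forall U : X -> Prop, weak_open U -> U (phi t) ->
      exists N, forall t', in_subsets_le M k t' -> agree_below N t t' -> U (phi t').

Definition subordinating_map {X : Banach} (M : nat -> nat) (k : nat)
  (x : list nat -> X) (phi : list nat -> X) : Prop :=
  weak_continuous_on M k phi /\ forall s, in_subsets_eq M k s -> phi s = x s.

Definition plegma_pair (L : nat -> nat) (k : nat) (s1 s2 : list nat) : Prop :=
  in_subsets_eq L k s1 /\ in_subsets_eq L k s2 /\
  (forall i, (i < k)%nat -> (nth i s1 0 < nth i s2 0)%nat) /\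
  (forall i, (S i < k)%nat -> (nth i s2 0 < nth (S i) s1 0)%nat).

Definition canonical_tree_decomposition {X : Banach} (e : nat -> X)
  (L : nat -> nat) (k : nat) (x : list nat -> X) (y : list nat -> X) : Prop :=
  (forall s, in_subsets_eq L k s ->
     x s = vsum (map (fun j => y (restr s j)) (seq 0 (S k)))) /\
  (forall t, in_subsets_le L k t -> t <> [] -> finite_supp e (y t)) /\
  (forall s j1 j2, in_subsets_eq L k s -> (1 <= j1)%nat -> (j1 < j2)%nat ->
     (j2 <= k)%nat -> supp_lt e (y (restr s j1)) (y (restr s j2))) /\
  (forall s1 s2 j1 j2, plegma_pair L k s1 s2 -> (1 <= j1)%nat -> (j1 <= j2)%nat ->
     (j2 <= k)%nat -> supp_lt e (y (restr s1 j1)) (y (restr s2 j2))) /\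
  (forall s1 s2 j1 j2, plegma_pair L k s1 s2 -> (1 <= j1)%nat -> (j1 < j2)%nat ->
     (j2 <= k)%nat -> supp_lt e (y (restr s2 j1)) (y (restr s1 j2))).

(* Main.v *)
Require Import Defs.
From Stdlib Require Import Reals List Lra Lia.
From Stdlib Require Import IndefiniteDescription Classical.
Import ListNotations.
Open Scope R_scope.

Arguments vadd_assoc {_}. Arguments vadd_comm {_}. Arguments vadd_0l {_}.
Arguments vadd_oppr {_}. Arguments vscal_1 {_}. Arguments vscal_assoc {_}.
Arguments vscal_addr {_}. Arguments vscal_addl {_}. Arguments vnorm_eq0 {_}.
Arguments vnorm_0 {_}. Arguments vnorm_scal {_}. Arguments vnorm_triangle {_}.
Arguments complete {_}.
Lemma vadd_0r {X : Banach} (u : X) : vadd u vzero = u.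
Proof. rewrite vadd_comm; apply vadd_0l. Qed.

Lemma vadd_oppl {X : Banach} (u : X) : vadd (vopp u) u = vzero.
Proof. rewrite vadd_comm; apply vadd_oppr. Qed.

Lemma vadd_cancel_l {X : Banach} (u v w : X) : vadd u v = vadd u w -> v = w.
Proof.
  intro H. rewrite <- (vadd_0l v), <- (vadd_0l w), <- (vadd_oppl u).
  rewrite <- !vadd_assoc, H. reflexivity.
Qed.

Lemma vopp_unique {X : Banach} (u v : X) : vadd u v = vzero -> v = vopp u.
Proof. intro H. apply (vadd_cancel_l u). rewrite H, vadd_oppr. reflexivity. Qed.

Lemma vopp_opp {X : Banach} (u : X) : vopp (vopp u) = u.
Proof. symmetry. apply vopp_unique. apply vadd_oppl. Qed.

Lemma vopp_zero {X : Banach} : vopp (@vzero X) = vzero.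
Proof. symmetry. apply vopp_unique. apply vadd_0l. Qed.

Lemma vadd_ca {X : Banach} (u v w : X) : vadd u (vadd v w) = vadd v (vadd u w).
Proof. rewrite !vadd_assoc, (vadd_comm u v). reflexivity. Qed.

Lemma vadd_acbd {X : Banach} (a b c d : X) :
  vadd (vadd a b) (vadd c d) = vadd (vadd a c) (vadd b d).
Proof. rewrite <- !vadd_assoc. f_equal. apply vadd_ca. Qed.

Lemma vopp_add {X : Banach} (u v : X) : vopp (vadd u v) = vadd (vopp u) (vopp v).
Proof.
  symmetry. apply vopp_unique. rewrite vadd_acbd, !vadd_oppr, vadd_0l. reflexivity.
Qed.

Lemma vscal_0 {X : Banach} (u : X) : vscal 0 u = vzero.
Proof.
  apply (vadd_cancel_l (vscal 0 u)). rewrite vadd_0r, <- vscal_addl.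
  f_equal. ring.
Qed.

Lemma vscal_zero {X : Banach} (a : R) : vscal a (@vzero X) = vzero.
Proof. rewrite <- (vscal_0 vzero), vscal_assoc. f_equal. ring. Qed.

Lemma vscal_opp {X : Banach} (a : R) (u : X) : vscal (- a) u = vopp (vscal a u).
Proof.
  apply vopp_unique. rewrite <- vscal_addl. replace (a + - a) with 0 by ring.
  apply vscal_0.
Qed.

Lemma vscal_oppv {X : Banach} (a : R) (u : X) : vscal a (vopp u) = vopp (vscal a u).
Proof.
  apply vopp_unique. rewrite <- vscal_addr, vadd_oppr. apply vscal_zero.
Qed.

Lemma vsub_add_distr {X : Banach} (a b c d : X) :
  vsub (vadd a b) (vadd c d) = vadd (vsub a c) (vsub b d).
Proof. unfold vsub. rewrite vopp_add, vadd_acbd. reflexivity. Qed.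

Lemma vsub_diag {X : Banach} (u : X) : vsub u u = vzero.
Proof. apply vadd_oppr. Qed.

Lemma vsub_0r {X : Banach} (u : X) : vsub u vzero = u.
Proof. unfold vsub. rewrite vopp_zero. apply vadd_0r. Qed.

Lemma vsub_opp {X : Banach} (u v : X) : vopp (vsub u v) = vsub v u.
Proof. unfold vsub. rewrite vopp_add, vopp_opp, vadd_comm. reflexivity. Qed.

Lemma vsub_trans {X : Banach} (u v w : X) : vsub u w = vadd (vsub u v) (vsub v w).
Proof.
  unfold vsub. rewrite <- vadd_assoc, (vadd_assoc (vopp v)), vadd_oppl, vadd_0l.
  reflexivity.
Qed.

Lemma vsub_add_r {X : Banach} (u v : X) : vsub (vadd u v) u = v.
Proof.
  unfold vsub. rewrite (vadd_comm u v), <- vadd_assoc, vadd_oppr, vadd_0r. reflexivity.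
Qed.

Lemma vadd_sub {X : Banach} (u v : X) : vadd v (vsub u v) = u.
Proof. unfold vsub. rewrite vadd_ca, vadd_oppr, vadd_0r. reflexivity. Qed.

Lemma vsub_eq0 {X : Banach} (u v : X) : vsub u v = vzero -> u = v.
Proof. intro H. rewrite <- (vadd_sub u v), H, vadd_0r. reflexivity. Qed.

Lemma vscal_sub {X : Banach} (a : R) (u v : X) : vscal a (vsub u v) = vsub (vscal a u) (vscal a v).
Proof. unfold vsub. rewrite vscal_addr, vscal_oppv. reflexivity. Qed.

Lemma vnorm_opp {X : Banach} (u : X) : vnorm (vopp u) = vnorm u.
Proof.
  assert (H : vopp u = vscal (- (1)) u) by (rewrite vscal_opp, vscal_1; reflexivity).
  rewrite H, vnorm_scal, Rabs_Ropp, Rabs_R1. ring.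
Qed.

Lemma vnorm_ge0 {X : Banach} (u : X) : 0 <= vnorm u.
Proof.
  pose proof (vnorm_triangle u (vopp u)) as H. rewrite vadd_oppr, vnorm_0, vnorm_opp in H. lra.
Qed.

Lemma vnorm_sub_sym {X : Banach} (u v : X) : vnorm (vsub u v) = vnorm (vsub v u).
Proof. rewrite <- vsub_opp, vnorm_opp. reflexivity. Qed.

Lemma vnorm_sub_tri {X : Banach} (u v w : X) :
  vnorm (vsub u w) <= vnorm (vsub u v) + vnorm (vsub v w).
Proof. rewrite (vsub_trans u v w). apply vnorm_triangle. Qed.

Lemma vnorm_sub_le {X : Banach} (u v : X) : vnorm (vsub u v) <= vnorm u + vnorm v.
Proof. unfold vsub. rewrite <- (vnorm_opp v). apply vnorm_triangle. Qed.

Lemma vnorm_rev_tri {X : Banach} (u v : X) : vnorm u <= vnorm v + vnorm (vsub u v).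
Proof. pose proof (vnorm_sub_tri u v vzero). rewrite !vsub_0r in H. lra. Qed.

Lemma vsum_app {X : Banach} (l1 l2 : list X) : vsum (l1 ++ l2) = vadd (vsum l1) (vsum l2).
Proof.
  induction l1; simpl. now rewrite vadd_0l. rewrite IHl1. apply vadd_assoc.
Qed.

Lemma vsum_map_add {X : Banach} {A : Type} (f g : A -> X) (l : list A) :
  vsum (map (fun i => vadd (f i) (g i)) l) = vadd (vsum (map f l)) (vsum (map g l)).
Proof.
  induction l; simpl. now rewrite vadd_0l. rewrite IHl. apply vadd_acbd.
Qed.

Lemma vsum_map_sub {X : Banach} {A : Type} (f g : A -> X) (l : list A) :
  vsum (map (fun i => vsub (f i) (g i)) l) = vsub (vsum (map f l)) (vsum (map g l)).
Proof.
  induction l; simpl. now rewrite vsub_0r. rewrite IHl. symmetry. apply vsub_add_distr.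
Qed.

Lemma vsum_map_scal {X : Banach} {A : Type} (a : R) (f : A -> X) (l : list A) :
  vsum (map (fun i => vscal a (f i)) l) = vscal a (vsum (map f l)).
Proof.
  induction l; simpl. now rewrite vscal_zero. rewrite IHl. symmetry. apply vscal_addr.
Qed.

Lemma vsum_map_ext {X : Banach} {A : Type} (f g : A -> X) (l : list A) :
  (forall i, In i l -> f i = g i) -> vsum (map f l) = vsum (map g l).
Proof. intro H. f_equal. apply map_ext_in. exact H. Qed.

Lemma vsum_map_zero {X : Banach} {A : Type} (l : list A) :
  vsum (map (fun _ => @vzero X) l) = vzero.
Proof. induction l; simpl; auto. rewrite IHl. apply vadd_0l. Qed.

Lemma vsum_norm {X : Banach} {A : Type} (f : A -> X) (l : list A) :
  vnorm (vsum (map f l)) <= fold_right Rplus 0 (map (fun i => vnorm (f i)) l).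
Proof.
  induction l; simpl. rewrite vnorm_0; lra.
  eapply Rle_trans. apply vnorm_triangle. lra.
Qed.

Lemma fold_Rplus_le {A : Type} (f g : A -> R) (l : list A) :
  (forall i, In i l -> f i <= g i) ->
  fold_right Rplus 0 (map f l) <= fold_right Rplus 0 (map g l).
Proof.
  induction l; simpl; intros; [lra|].
  assert (f a <= g a) by auto. assert (fold_right Rplus 0 (map f l) <= fold_right Rplus 0 (map g l)) by auto. lra.
Qed.

Lemma fold_Rplus_const {A : Type} (c : R) (l : list A) :
  fold_right Rplus 0 (map (fun _ => c) l) = INR (length l) * c.
Proof.
  induction l; simpl. ring. rewrite IHl. destruct (length l); simpl; ring.
Qed.

Lemma vsum_seq_S {X : Banach} (f : nat -> X) (a n : nat) :
  vsum (map f (seq a (S n))) = vadd (vsum (map f (seq a n))) (f (a + n)%nat).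
Proof. rewrite seq_S, map_app, vsum_app. simpl. now rewrite vadd_0r. Qed.

Lemma vscal_subl {X : Banach} (a b : R) (u : X) : vsub (vscal a u) (vscal b u) = vscal (a - b) u.
Proof. unfold vsub. rewrite <- vscal_opp, <- vscal_addl. reflexivity. Qed.

Lemma vsub_sub_self {X : Banach} (a b : X) : vsub a (vsub a b) = b.
Proof. unfold vsub. rewrite vopp_add, vopp_opp, vadd_assoc, vadd_oppr, vadd_0l. reflexivity. Qed.

Lemma vsub_err {X : Banach} (d a b : X) : vsub d (vadd (vsub d a) b) = vsub a b.
Proof.
  unfold vsub. rewrite !vopp_add, vopp_opp, vadd_assoc, (vadd_assoc d (vopp d) a), vadd_oppr, vadd_0l.
  reflexivity.
Qed.

Lemma vsub_sub_add {X : Banach} (a b c : X) : vsub a (vadd b c) = vsub (vsub a b) c.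
Proof. unfold vsub. rewrite vopp_add, vadd_assoc. reflexivity. Qed.

Lemma fold_Rplus_scal {A : Type} (d : R) (g : A -> R) (l : list A) :
  fold_right Rplus 0 (map (fun j => d * g j) l) = d * fold_right Rplus 0 (map g l).
Proof. induction l; simpl. ring. rewrite IHl. ring. Qed.

Lemma fold_Rplus_nonneg {A : Type} (g : A -> R) (l : list A) :
  (forall j, 0 <= g j) -> 0 <= fold_right Rplus 0 (map g l).
Proof. intro H. induction l; simpl. lra. pose proof (H a). lra. Qed.
Definition ps {X : Banach} (e : nat -> X) (a : nat -> R) (n : nat) : X :=
  vsum (map (fun i => vscal (a i) (e i)) (seq 0 n)).

Lemma ps_add {X : Banach} (e : nat -> X) a b n :
  ps e (fun i => a i + b i) n = vadd (ps e a n) (ps e b n).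
Proof.
  unfold ps. rewrite <- vsum_map_add. apply vsum_map_ext. intros. apply vscal_addl.
Qed.

Lemma ps_scal {X : Banach} (e : nat -> X) c a n :
  ps e (fun i => c * a i) n = vscal c (ps e a n).
Proof.
  unfold ps. rewrite <- vsum_map_scal. apply vsum_map_ext. intros. symmetry; apply vscal_assoc.
Qed.

Lemma ps_S {X : Banach} (e : nat -> X) a n :
  ps e a (S n) = vadd (ps e a n) (vscal (a n) (e n)).
Proof. unfold ps. rewrite vsum_seq_S. reflexivity. Qed.

Lemma ps_ext {X : Banach} (e : nat -> X) a b n :
  (forall i, (i < n)%nat -> a i = b i) -> ps e a n = ps e b n.
Proof.
  intro H. unfold ps. apply vsum_map_ext. intros i Hi. apply in_seq in Hi. rewrite H; auto; lia.
Qed.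

Lemma expands_add {X : Banach} (e : nat -> X) a b u v :
  expands e a u -> expands e b v -> expands e (fun i => a i + b i) (vadd u v).
Proof.
  intros Ha Hb eps Heps.
  destruct (Ha (eps/2)) as [N1 H1]; [lra|]. destruct (Hb (eps/2)) as [N2 H2]; [lra|].
  exists (max N1 N2). intros n Hn. fold (ps e (fun i => a i + b i) n).
  rewrite ps_add, vsub_add_distr. eapply Rle_lt_trans. apply vnorm_triangle.
  specialize (H1 n ltac:(lia)). specialize (H2 n ltac:(lia)). fold (ps e a n) in H1.
  fold (ps e b n) in H2. lra.
Qed.

Lemma expands_scal {X : Banach} (e : nat -> X) c a u :
  expands e a u -> expands e (fun i => c * a i) (vscal c u).
Proof.
  intros Ha eps Heps.
  destruct (Ha (eps / (Rabs c + 1))) as [N H1].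
  { apply Rdiv_lt_0_compat; [lra|]. pose proof (Rabs_pos c); lra. }
  exists N. intros n Hn. fold (ps e (fun i => c * a i) n).
  rewrite ps_scal, <- vscal_sub, vnorm_scal. specialize (H1 n Hn). fold (ps e a n) in H1.
  pose proof (Rabs_pos c). pose proof (vnorm_ge0 (vsub (ps e a n) u)).
  apply Rle_lt_trans with ((Rabs c + 1) * vnorm (vsub (ps e a n) u)). nra.
  apply Rmult_lt_compat_l with (r := Rabs c + 1) in H1; [|lra].
  replace ((Rabs c + 1) * (eps / (Rabs c + 1))) with eps in H1 by (field; lra). lra.
Qed.

Definition coef {X : Banach} {e : nat -> X} (He : schauder_basis e) (j : nat) (x : X) : R :=
  proj1_sig (constructive_indefinite_description _ (proj1 He x)) j.

Lemma coef_spec {X : Banach} {e : nat -> X} (He : schauder_basis e) (x : X) :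
  expands e (fun j => coef He j x) x.
Proof.
  unfold coef. destruct (constructive_indefinite_description _ (proj1 He x)). simpl. exact e0.
Qed.

Lemma coef_unique {X : Banach} {e : nat -> X} (He : schauder_basis e) a (x : X) :
  expands e a x -> forall j, coef He j x = a j.
Proof. intros H j. apply (proj2 He x). apply coef_spec. exact H. Qed.

Lemma coef_add {X : Banach} {e : nat -> X} (He : schauder_basis e) j (u v : X) :
  coef He j (vadd u v) = coef He j u + coef He j v.
Proof.
  apply (coef_unique He (fun i => coef He i u + coef He i v)).
  apply expands_add; apply coef_spec.
Qed.

Lemma coef_scal {X : Banach} {e : nat -> X} (He : schauder_basis e) j c (u : X) :
  coef He j (vscal c u) = c * coef He j u.
Proof.
  apply (coef_unique He (fun i => c * coef He i u)). apply expands_scal; apply coef_spec.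
Qed.

Lemma coef_opp {X : Banach} {e : nat -> X} (He : schauder_basis e) j (u : X) :
  coef He j (vopp u) = - coef He j u.
Proof.
  replace (vopp u) with (vscal (- (1)) u) by (rewrite vscal_opp, vscal_1; reflexivity).
  rewrite coef_scal. ring.
Qed.

Lemma coef_sub {X : Banach} {e : nat -> X} (He : schauder_basis e) j (u v : X) :
  coef He j (vsub u v) = coef He j u - coef He j v.
Proof. unfold vsub. rewrite coef_add, coef_opp. ring. Qed.

Lemma coef_zero {X : Banach} {e : nat -> X} (He : schauder_basis e) j :
  coef He j (@vzero X) = 0.
Proof. rewrite <- (vscal_0 vzero), coef_scal. ring. Qed.

Definition P {X : Banach} {e : nat -> X} (He : schauder_basis e) (n : nat) (x : X) : X :=
  ps e (fun i => coef He i x) n.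

Lemma P_add {X : Banach} {e : nat -> X} (He : schauder_basis e) n (u v : X) :
  P He n (vadd u v) = vadd (P He n u) (P He n v).
Proof. unfold P. rewrite <- ps_add. apply ps_ext. intros. apply coef_add. Qed.

Lemma P_scal {X : Banach} {e : nat -> X} (He : schauder_basis e) n c (u : X) :
  P He n (vscal c u) = vscal c (P He n u).
Proof. unfold P. rewrite <- ps_scal. apply ps_ext. intros. apply coef_scal. Qed.

Lemma P_opp {X : Banach} {e : nat -> X} (He : schauder_basis e) n (u : X) :
  P He n (vopp u) = vopp (P He n u).
Proof.
  replace (vopp u) with (vscal (- (1)) u) by (rewrite vscal_opp, vscal_1; reflexivity).
  rewrite P_scal, vscal_opp, vscal_1. reflexivity.
Qed.

Lemma P_sub {X : Banach} {e : nat -> X} (He : schauder_basis e) n (u v : X) :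
  P He n (vsub u v) = vsub (P He n u) (P He n v).
Proof. unfold vsub. rewrite P_add, P_opp. reflexivity. Qed.

Lemma P_zero {X : Banach} {e : nat -> X} (He : schauder_basis e) n :
  P He n (@vzero X) = vzero.
Proof.
  transitivity (P He n (vscal 0 vzero)). f_equal; symmetry; apply vscal_0.
  rewrite P_scal, vscal_0. reflexivity.
Qed.

Lemma P_0 {X : Banach} {e : nat -> X} (He : schauder_basis e) (u : X) :
  P He 0 u = vzero.
Proof. reflexivity. Qed.

Lemma P_S {X : Banach} {e : nat -> X} (He : schauder_basis e) n (u : X) :
  P He (S n) u = vadd (P He n u) (vscal (coef He n u) (e n)).
Proof. apply ps_S. Qed.

Lemma P_cv {X : Banach} {e : nat -> X} (He : schauder_basis e) (u : X) :
  forall eps, 0 < eps -> exists N, forall n, (N <= n)%nat -> vnorm (vsub (P He n u) u) < eps.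
Proof. apply (coef_spec He u). Qed.

Lemma e_nonzero {X : Banach} {e : nat -> X} (He : schauder_basis e) j : 0 < vnorm (e j).
Proof.
  destruct (Rle_lt_dec (vnorm (e j)) 0) as [H|H]; [|exact H].
  exfalso. assert (Hz : e j = vzero) by (apply vnorm_eq0; pose proof (vnorm_ge0 (e j)); lra).
  (* zero has coefficients 0 and also delta_j *)
  assert (H1 : expands e (fun _ => 0) vzero).
  { intros eps Heps. exists 0%nat. intros n _. fold (ps e (fun _ => 0) n).
    replace (ps e (fun _ => 0) n) with (ps e (fun i => 0 * 0) n) by (apply ps_ext; intros; ring).
    rewrite ps_scal, vscal_0, vsub_diag, vnorm_0. lra. }
  assert (H2 : expands e (fun i => if Nat.eq_dec i j then 1 else 0) vzero).
  { intros eps Heps. exists 0%nat. intros n _.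
    fold (ps e (fun i => if Nat.eq_dec i j then 1 else 0) n).
    assert (ps e (fun i => if Nat.eq_dec i j then 1 else 0) n = vzero) as ->.
    { induction n. reflexivity. rewrite ps_S, IHn, vadd_0l.
      destruct (Nat.eq_dec n j). subst. rewrite Hz. apply vscal_zero. apply vscal_0. }
    rewrite vsub_diag, vnorm_0. lra. }
  pose proof (proj2 He _ _ _ H1 H2 j). simpl in H0. destruct (Nat.eq_dec j j); [lra|congruence].
Qed.

Lemma coef_P_bound {X : Banach} {e : nat -> X} (He : schauder_basis e) j (u : X) :
  Rabs (coef He j u) * vnorm (e j) = vnorm (vsub (P He (S j) u) (P He j u)).
Proof. rewrite P_S, vsub_add_r, vnorm_scal. reflexivity. Qed.
Lemma le_eps (a b : R) : (forall eps, 0 < eps -> a <= b + eps) -> a <= b.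
Proof.
  intro H. destruct (Rle_lt_dec a b) as [|Hlt]; auto.
  specialize (H ((a - b)/2) ltac:(lra)). lra.
Qed.

Lemma half_pow_pos n : 0 < (/2)^n.
Proof. apply pow_lt. lra. Qed.

Lemma half_pow_S n : (/2)^(S n) = (/2)^n / 2.
Proof. simpl. field. Qed.

Lemma half_pow_small eps : 0 < eps -> exists N, (/2)^N < eps.
Proof.
  intro H. destruct (pow_lt_1_zero (/2) ltac:(rewrite Rabs_pos_eq; lra) eps H) as [N HN].
  exists N. specialize (HN N (le_n N)). rewrite Rabs_pos_eq in HN; auto. left; apply half_pow_pos.
Qed.

Lemma half_pow_le n m : (n <= m)%nat -> (/2)^m <= (/2)^n.
Proof.
  induction 1. lra. rewrite half_pow_S. pose proof (half_pow_pos m). lra.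
Qed.

Lemma Baire {X : Banach} (C : nat -> X -> Prop)
  (Hcl : forall m x, ~ C m x -> exists d, 0 < d /\ forall y, vnorm (vsub y x) < d -> ~ C m y)
  (Hcov : forall x, exists m, C m x) :
  exists m x0 r, 0 < r /\ forall y, vnorm (vsub y x0) < r -> C m y.
Proof.
  apply NNPP. intro Hneg.
  assert (H : forall m x0 r, 0 < r -> exists y, vnorm (vsub y x0) < r /\ ~ C m y).
  { intros m x0 r Hr. apply NNPP. intro H1. apply Hneg. exists m, x0, r. split; auto.
    intros y Hy. apply NNPP. intro H2. apply H1. exists y. auto. }
  assert (Hstep : forall (i : nat) (p : X * R), exists q : X * R,
     0 < snd p -> (0 < snd q /\ snd q <= snd p / 2 /\
       forall y, vnorm (vsub y (fst q)) <= snd q -> vnorm (vsub y (fst p)) < snd p /\ ~ C i y)).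
  { intros i [x0 r]. simpl. destruct (Rlt_le_dec 0 r) as [Hr|Hr].
    2:{ exists (x0, r). intro; lra. }
    destruct (H i x0 r Hr) as [y [Hy1 Hy2]]. destruct (Hcl i y Hy2) as [d [Hd Hd2]].
    exists (y, Rmin (d/2) (Rmin ((r - vnorm (vsub y x0))/2) (r/2))). simpl. intros _.
    pose proof (Rmin_l (d/2) (Rmin ((r - vnorm (vsub y x0))/2) (r/2))).
    pose proof (Rmin_r (d/2) (Rmin ((r - vnorm (vsub y x0))/2) (r/2))).
    pose proof (Rmin_l ((r - vnorm (vsub y x0))/2) (r/2)).
    pose proof (Rmin_r ((r - vnorm (vsub y x0))/2) (r/2)).
    split; [|split].
    - repeat apply Rmin_glb_lt; lra.
    - lra.
    - intros z Hz. split.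
      + pose proof (vnorm_sub_tri z y x0). lra.
      + apply Hd2. lra. }
  set (F := fun i p => proj1_sig (constructive_indefinite_description _ (Hstep i p))).
  assert (HF : forall i p, 0 < snd p -> 0 < snd (F i p) /\ snd (F i p) <= snd p / 2 /\
       forall y, vnorm (vsub y (fst (F i p))) <= snd (F i p) ->
          vnorm (vsub y (fst p)) < snd p /\ ~ C i y).
  { intros i p. unfold F. destruct (constructive_indefinite_description _ (Hstep i p)). simpl. auto. }
  set (s := fix s (i : nat) : X * R := match i with O => (vzero, 1) | S i => F i (s i) end).
  assert (Hpos : forall i, 0 < snd (s i) /\ snd (s i) <= (/2)^i).
  { induction i. simpl. lra. simpl (s (S i)). destruct IHi as [H1 H2].
    destruct (HF i (s i) H1) as [H3 [H4 _]]. split; auto. rewrite half_pow_S. lra. }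
  assert (Hnest : forall i j, (i <= j)%nat -> forall y, vnorm (vsub y (fst (s j))) <= snd (s j) ->
                    vnorm (vsub y (fst (s i))) <= snd (s i)).
  { intros i j Hij. induction Hij; auto. intros y Hy. apply IHHij.
    simpl in Hy. destruct (HF m (s m) (proj1 (Hpos m))) as [_ [_ H3]]. left. apply (H3 y Hy). }
  assert (Hcen : forall i j, (i <= j)%nat -> vnorm (vsub (fst (s j)) (fst (s i))) <= snd (s i)).
  { intros. apply (Hnest i j H0). rewrite vsub_diag, vnorm_0. left; apply Hpos. }
  destruct (complete (fun i => fst (s i))) as [z Hz].
  { intros eps Heps. destruct (half_pow_small (eps/2) ltac:(lra)) as [N HN]. exists N.
    intros m n Hm Hn. pose proof (Hcen N m Hm) as A1. pose proof (Hcen N n Hn) as A2.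
    pose proof (vnorm_sub_tri (fst (s m)) (fst (s N)) (fst (s n))) as A3.
    rewrite (vnorm_sub_sym (fst (s N))) in A3. pose proof (Hpos N). unfold vsub in *. lra. }
  destruct (Hcov z) as [m Hm].
  assert (Hz2 : vnorm (vsub z (fst (s (S m)))) <= snd (s (S m))).
  { apply le_eps. intros eps Heps. destruct (Hz eps Heps) as [N HN].
    assert (A1 : vnorm (vsub (fst (s (max N (S m)))) z) < eps) by (apply HN; lia).
    pose proof (Hcen (S m) (max N (S m)) ltac:(lia)) as A2.
    pose proof (vnorm_sub_tri z (fst (s (max N (S m)))) (fst (s (S m)))) as A3.
    rewrite vnorm_sub_sym in A1. unfold vsub in *. lra. }
  simpl in Hz2. destruct (HF m (s m) (proj1 (Hpos m))) as [_ [_ H3]].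
  destruct (H3 z Hz2). contradiction.
Qed.
Lemma P_diff_bound {X : Banach} {e : nat -> X} (He : schauder_basis e) j (u v : X) b :
  (forall n, vnorm (vsub (P He n u) (P He n v)) <= b) ->
  Rabs (coef He j u - coef He j v) <= 2 * b / vnorm (e j).
Proof.
  intro H. pose proof (e_nonzero He j) as He0.
  rewrite <- coef_sub. apply Rmult_le_reg_r with (vnorm (e j)); auto.
  rewrite coef_P_bound. replace (2 * b / vnorm (e j) * vnorm (e j)) with (b + b) by (field; lra).
  rewrite !P_sub. eapply Rle_trans. apply vnorm_sub_le. pose proof (H (S j)); pose proof (H j). lra.
Qed.

Lemma P_complete {X : Banach} {e : nat -> X} (He : schauder_basis e)
  (w : nat -> X) (beta : nat -> R) :
  (forall i, 0 <= beta i) -> Un_cv beta 0 ->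
  (forall i j n, (i <= j)%nat -> vnorm (vsub (P He n (w j)) (P He n (w i))) <= beta i) ->
  exists wl, forall i, (forall n, vnorm (vsub (P He n wl) (P He n (w i))) <= beta i) /\
                       vnorm (vsub wl (w i)) <= beta i.
Proof.
  intros Hb0 Hbcv Hw.
  assert (Hbsmall : forall eps, 0 < eps -> exists I, forall i, (I <= i)%nat -> beta i < eps).
  { intros eps Heps. destruct (Hbcv eps Heps) as [I HI]. exists I. intros i Hi.
    specialize (HI i Hi). unfold R_dist in HI. rewrite Rminus_0_r, Rabs_pos_eq in HI; auto. }
  assert (Hcau : forall j, Cauchy_crit (fun i => coef He j (w i))).
  { intros j eps Heps. pose proof (e_nonzero He j).
    destruct (Hbsmall (eps * vnorm (e j) / 3)) as [I HI].
    { apply Rdiv_lt_0_compat; [apply Rmult_lt_0_compat|]; lra. }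
    exists I. intros p q Hp Hq. unfold R_dist.
    assert (Hpq : forall p q, (I <= p)%nat -> (p <= q)%nat ->
               Rabs (coef He j (w q) - coef He j (w p)) < eps).
    { intros p0 q0 Hp0 Hq0. eapply Rle_lt_trans. apply (P_diff_bound He j _ _ (beta p0)).
      intro n. apply Hw; auto. specialize (HI p0 Hp0).
      apply Rmult_lt_reg_r with (vnorm (e j)); auto.
      replace (2 * beta p0 / vnorm (e j) * vnorm (e j)) with (2 * beta p0) by (field; lra).
      set (t := eps * vnorm (e j)) in *. assert (0 < t) by (unfold t; nra). lra. }
    destruct (Nat.le_ge_cases p q).
    - rewrite Rabs_minus_sym. apply Hpq; auto.
    - apply Hpq; auto. }
  set (a := fun j => proj1_sig (R_complete _ (Hcau j))).
  assert (Ha : forall j, Un_cv (fun i => coef He j (w i)) (a j)).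
  { intro j. unfold a. destruct (R_complete _ (Hcau j)). simpl. auto. }
  set (S := ps e a).
  assert (Q1 : forall n eps, 0 < eps -> exists I, forall i, (I <= i)%nat ->
                 vnorm (vsub (P He n (w i)) (S n)) < eps).
  { induction n; intros eps Heps.
    - exists 0%nat. intros. unfold S, P, ps. simpl. rewrite vsub_diag, vnorm_0. lra.
    - destruct (IHn (eps/2) ltac:(lra)) as [I1 HI1].
      pose proof (e_nonzero He n).
      destruct (Ha n (eps / 2 / vnorm (e n))) as [I2 HI2].
      { apply Rdiv_lt_0_compat; lra. }
      exists (max I1 I2). intros i Hi. unfold S. rewrite P_S, ps_S, vsub_add_distr.
      eapply Rle_lt_trans. apply vnorm_triangle. fold (S n).
      specialize (HI1 i ltac:(lia)). specialize (HI2 i ltac:(lia)). unfold R_dist in HI2.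
      rewrite vscal_subl, vnorm_scal.
      apply Rmult_lt_compat_r with (r := vnorm (e n)) in HI2; auto.
      replace (eps / 2 / vnorm (e n) * vnorm (e n)) with (eps/2) in HI2 by (field; lra). lra. }
  assert (Q2 : forall n i, vnorm (vsub (S n) (P He n (w i))) <= beta i).
  { intros n i. apply le_eps. intros eps Heps. destruct (Q1 n eps Heps) as [I HI].
    specialize (HI (max I i) ltac:(lia)). specialize (Hw i (max I i) n ltac:(lia)).
    pose proof (vnorm_sub_tri (S n) (P He n (w (max I i))) (P He n (w i))).
    rewrite vnorm_sub_sym in HI. lra. }
  destruct (complete S) as [wl Hwl].
  { intros eps Heps. destruct (Hbsmall (eps/3) ltac:(lra)) as [I HI].
    destruct (P_cv He (w I) (eps/6) ltac:(lra)) as [N HN]. exists N. intros m n Hm Hn.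
    fold (vsub (S m) (S n)).
    pose proof (vnorm_sub_tri (S m) (P He m (w I)) (S n)) as B1.
    pose proof (vnorm_sub_tri (P He m (w I)) (P He n (w I)) (S n)) as B2.
    pose proof (vnorm_sub_tri (P He m (w I)) (w I) (P He n (w I))) as B3.
    pose proof (HN m Hm) as B4. pose proof (HN n Hn) as B5. rewrite (vnorm_sub_sym (w I)) in B3.
    pose proof (Q2 m I) as B6. pose proof (Q2 n I) as B7. rewrite (vnorm_sub_sym (P He n (w I)) (S n)) in B2.
    specialize (HI I (le_n I)). lra. }
  assert (Hexp : expands e a wl) by exact Hwl.
  assert (HP : forall n, P He n wl = S n).
  { intro n. unfold P, S. apply ps_ext. intros. apply coef_unique. auto. }
  exists wl. intro i. split.
  - intro n. rewrite HP. apply Q2.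
  - apply le_eps. intros eps Heps.
    destruct (Hwl (eps/2) ltac:(lra)) as [N1 HN1]. destruct (P_cv He (w i) (eps/2) ltac:(lra)) as [N2 HN2].
    set (n := max N1 N2). specialize (HN1 n ltac:(lia)). specialize (HN2 n ltac:(lia)).
    assert (HN1' : vnorm (vsub wl (S n)) < eps/2) by (rewrite vnorm_sub_sym; exact HN1).
    pose proof (Q2 n i).
    pose proof (vnorm_sub_tri wl (S n) (w i)). pose proof (vnorm_sub_tri (S n) (P He n (w i)) (w i)).
    lra.
Qed.
Definition Abd {X : Banach} {e : nat -> X} (He : schauder_basis e) (c : R) (x : X) : Prop :=
  forall n, vnorm (P He n x) <= c.

Definition Acl {X : Banach} {e : nat -> X} (He : schauder_basis e) (c : R) (x : X) : Prop :=
  forall d, 0 < d -> exists a, Abd He c a /\ vnorm (vsub x a) < d.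

Lemma Abd_finite {X : Banach} {e : nat -> X} (He : schauder_basis e) (x : X) :
  exists m : nat, Abd He (INR m) x.
Proof.
  destruct (P_cv He x 1 ltac:(lra)) as [N HN].
  assert (Hf : forall N, exists c, forall n, (n < N)%nat -> vnorm (P He n x) <= c).
  { induction N0. exists 0. intros; lia. destruct IHN0 as [c Hc].
    exists (Rmax c (vnorm (P He N0 x))). intros n Hn.
    destruct (Nat.eq_dec n N0). subst. apply Rmax_r. eapply Rle_trans. apply Hc. lia. apply Rmax_l. }
  destruct (Hf N) as [c Hc].
  destruct (INR_unbounded (Rmax c (vnorm x + 1))) as [m Hm]. exists m. intro n.
  destruct (Nat.lt_ge_cases n N).
  - eapply Rle_trans. apply Hc; auto. pose proof (Rmax_l c (vnorm x + 1)). lra.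
  - specialize (HN n H). pose proof (vnorm_rev_tri (P He n x) x).
    pose proof (Rmax_r c (vnorm x + 1)). lra.
Qed.

Lemma P_bounded {X : Banach} {e : nat -> X} (He : schauder_basis e) :
  exists C, 0 <= C /\ forall u n, vnorm (P He n u) <= C * vnorm u.
Proof.
  destruct (Baire (fun m => Acl He (INR m))) as [m [x0 [r [Hr Hball]]]].
  - intros m x Hx. unfold Acl in Hx.
    apply not_all_ex_not in Hx. destruct Hx as [d Hd].
    apply imply_to_and in Hd. destruct Hd as [Hd Hd2].
    exists (d/2). split; [lra|]. intros y Hy Hcl. apply Hd2.
    destruct (Hcl (d/2) ltac:(lra)) as [a [Ha1 Ha2]]. exists a. split; auto.
    pose proof (vnorm_sub_tri x y a). rewrite vnorm_sub_sym in Hy. lra.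
  - intro x. destruct (Abd_finite He x) as [m Hm]. exists m. intros d Hd. exists x.
    split; auto. rewrite vsub_diag, vnorm_0. auto.
  - set (c := 2 * INR m).
    assert (Hc0 : 0 <= c) by (unfold c; pose proof (pos_INR m); lra).
    assert (Step1 : forall v, vnorm v < r -> forall d, 0 < d -> exists z, Abd He c z /\ vnorm (vsub v z) < d).
    { intros v Hv d Hd.
      assert (Hy1 : vnorm (vsub (vadd x0 v) x0) < r) by (rewrite vsub_add_r; exact Hv).
      assert (Hy2 : vnorm (vsub x0 x0) < r) by (rewrite vsub_diag, vnorm_0; exact Hr).
      destruct (Hball _ Hy1 (d/2) ltac:(lra)) as [a [Ha1 Ha2]].
      destruct (Hball _ Hy2 (d/2) ltac:(lra)) as [b [Hb1 Hb2]].
      exists (vsub a b). split.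
      - intro n. rewrite P_sub. eapply Rle_trans. apply vnorm_sub_le.
        specialize (Ha1 n); specialize (Hb1 n). unfold c. lra.
      - assert (Hid : vsub v (vsub a b) = vsub (vsub (vadd x0 v) a) (vsub x0 b)).
        { unfold vsub. rewrite !vopp_add, !vopp_opp.
          rewrite <- (vadd_assoc x0 v (vopp a)), vadd_acbd, vadd_oppr, vadd_0l, vadd_assoc.
          reflexivity. }
        rewrite Hid. eapply Rle_lt_trans. apply vnorm_sub_le. lra. }
    assert (Step2 : forall lam, 0 < lam -> forall v, vnorm v < lam * r -> forall d, 0 < d ->
                     exists z, Abd He (c * lam) z /\ vnorm (vsub v z) < d).
    { intros lam Hl v Hv d Hd.
      destruct (Step1 (vscal (/lam) v)) with (d := d / lam) as [z [Hz1 Hz2]].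
      { rewrite vnorm_scal, Rabs_pos_eq by (left; apply Rinv_0_lt_compat; auto).
        apply Rmult_lt_reg_l with lam; auto. rewrite <- Rmult_assoc, Rinv_r by lra. lra. }
      { apply Rdiv_lt_0_compat; auto. }
      exists (vscal lam z). split.
      - intro n. rewrite P_scal, vnorm_scal, Rabs_pos_eq by lra. specialize (Hz1 n).
        rewrite (Rmult_comm c). apply Rmult_le_compat_l; lra.
      - assert (Hv' : v = vscal lam (vscal (/lam) v)).
        { rewrite vscal_assoc, Rinv_r, vscal_1 by lra. reflexivity. }
        rewrite Hv', <- vscal_sub, vnorm_scal, Rabs_pos_eq by lra.
        apply Rmult_lt_compat_l with (r := lam) in Hz2; auto.
        replace (lam * (d / lam)) with d in Hz2 by (field; lra). exact Hz2. }
    assert (Hg : forall (i : nat) (v : X), exists z, vnorm v < r * (/2)^i ->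
               Abd He (c * (/2)^i) z /\ vnorm (vsub v z) < r * (/2)^(S i)).
    { intros i v. destruct (Rlt_le_dec (vnorm v) (r * (/2)^i)) as [Hv|Hv].
      - destruct (Step2 ((/2)^i) (half_pow_pos i) v) with (d := r * (/2)^(S i)) as [z Hz].
        rewrite Rmult_comm; auto. apply Rmult_lt_0_compat; auto. apply half_pow_pos.
        exists z; auto.
      - exists vzero. intro; lra. }
    set (g := fun i v => proj1_sig (constructive_indefinite_description _ (Hg i v))).
    assert (Hgs : forall i v, vnorm v < r * (/2)^i ->
               Abd He (c * (/2)^i) (g i v) /\ vnorm (vsub v (g i v)) < r * (/2)^(S i)).
    { intros i v. unfold g. destruct (constructive_indefinite_description _ (Hg i v)). auto. }
    assert (Hmain : forall x, vnorm x < r -> forall n, vnorm (P He n x) <= 2 * c).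
    { intros x Hx.
      set (rem := fix rem (i : nat) : X := match i with O => x | S i => vsub (rem i) (g i (rem i)) end).
      assert (Hrem : forall i, vnorm (rem i) < r * (/2)^i).
      { induction i. simpl. lra. simpl (rem (S i)). apply Hgs; auto. }
      set (w := fun i => vsub x (rem i)).
      assert (HwS : forall i, w (S i) = vadd (w i) (g i (rem i))).
      { intro i. unfold w. simpl (rem (S i)). unfold vsub. rewrite vopp_add, vopp_opp, vadd_assoc. reflexivity. }
      assert (Hwd : forall i j n, (i <= j)%nat ->
                vnorm (vsub (P He n (w j)) (P He n (w i))) <= 2 * c * (/2)^i - 2 * c * (/2)^j).
      { intros i j n Hij. induction Hij.
        - rewrite vsub_diag, vnorm_0. lra.
        - rewrite HwS, P_add. rewrite (vsub_trans _ (P He n (w m0))).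
          eapply Rle_trans. apply vnorm_triangle. rewrite vsub_add_r.
          destruct (Hgs m0 (rem m0) (Hrem m0)) as [H1 _]. specialize (H1 n).
          rewrite half_pow_S. lra. }
      destruct (P_complete He w (fun i => 2 * c * (/2)^i)) as [wl Hwl].
      + intro i. pose proof (half_pow_pos i). nra.
      + intros eps Heps. destruct (Rle_lt_dec c 0) as [Hc|Hc].
        * exists 0%nat. intros. unfold R_dist. replace c with 0 by lra. rewrite Rmult_0_r, Rmult_0_l, Rminus_0_r, Rabs_R0. auto.
        * destruct (half_pow_small (eps / (2 * c))) as [N HN]. apply Rdiv_lt_0_compat; lra.
          exists N. intros n Hn. unfold R_dist. rewrite Rminus_0_r, Rabs_pos_eq.
          pose proof (half_pow_le N n Hn). apply Rmult_lt_reg_r with (/ (2 * c)).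
          apply Rinv_0_lt_compat; lra. replace (2 * c * (/2)^n * / (2 * c)) with ((/2)^n) by (field; lra).
          unfold Rdiv in HN. lra. pose proof (half_pow_pos n). nra.
      + intros i j n Hij. pose proof (Hwd i j n Hij). pose proof (half_pow_pos j). nra.
      + assert (Hwlx : wl = x).
        { apply vsub_eq0, vnorm_eq0. apply Rle_antisym; [|apply vnorm_ge0].
          apply le_eps. intros eps Heps.
          destruct (half_pow_small (eps / (2 * c + r + 1))) as [N HN].
          { apply Rdiv_lt_0_compat; lra. }
          destruct (Hwl N) as [_ H2].
          assert (Hwx : vnorm (vsub (w N) x) = vnorm (rem N)).
          { unfold w. rewrite vnorm_sub_sym. unfold vsub.
            rewrite vopp_add, vopp_opp, vadd_assoc, vadd_oppr, vadd_0l. reflexivity. }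
          pose proof (vnorm_sub_tri wl (w N) x). pose proof (Hrem N).
          pose proof (half_pow_pos N).
          apply Rmult_lt_compat_l with (r := 2 * c + r + 1) in HN; [|lra].
          replace ((2 * c + r + 1) * (eps / (2 * c + r + 1))) with eps in HN by (field; lra).
          nra. }
        intro n. destruct (Hwl 0%nat) as [H1 _]. specialize (H1 n). rewrite Hwlx in H1.
        assert (Hw0 : w 0%nat = vzero) by (unfold w; simpl; apply vsub_diag).
        rewrite Hw0, P_zero, vsub_0r in H1. simpl in H1. lra. }
    exists (4 * c / r). split. { apply Rmult_le_pos. lra. left; apply Rinv_0_lt_compat; auto. }
    intros u n. destruct (Req_dec (vnorm u) 0) as [Hu|Hu].
    + apply vnorm_eq0 in Hu. subst u. rewrite P_zero, vnorm_0. lra.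
    + pose proof (vnorm_ge0 u). set (lam := r / (2 * vnorm u)).
      assert (Hlam : 0 < lam) by (unfold lam; apply Rdiv_lt_0_compat; lra).
      specialize (Hmain (vscal lam u)). rewrite vnorm_scal, Rabs_pos_eq in Hmain by lra.
      specialize (Hmain ltac:(unfold lam; field_simplify; lra) n).
      rewrite P_scal, vnorm_scal, Rabs_pos_eq in Hmain by lra.
      unfold lam in Hmain.
      apply Rmult_le_reg_l with (r / (2 * vnorm u)). apply Rdiv_lt_0_compat; lra.
      replace (r / (2 * vnorm u) * (4 * c / r * vnorm u)) with (2 * c) by (field; lra). exact Hmain.
Qed.

Lemma coef_bounded_linear {X : Banach} {e : nat -> X} (He : schauder_basis e) j :
  bounded_linear (coef He j).
Proof.
  split; [|split].
  - apply coef_add.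
  - apply coef_scal.
  - destruct (P_bounded He) as [C [HC HP]]. pose proof (e_nonzero He j).
    exists (2 * C / vnorm (e j)). intro u. apply Rmult_le_reg_r with (vnorm (e j)); auto.
    rewrite coef_P_bound. replace (2 * C / vnorm (e j) * vnorm u * vnorm (e j)) with (C * vnorm u + C * vnorm u) by (field; lra).
    eapply Rle_trans. apply vnorm_sub_le. pose proof (HP u (S j)). pose proof (HP u j). lra.
Qed.
Lemma bl_sub {X : Banach} (f : X -> R) (u v : X) : bounded_linear f -> f (vsub u v) = f u - f v.
Proof.
  intros [Ha [Hs _]]. unfold vsub. rewrite Ha.
  replace (vopp v) with (vscal (- (1)) v) by (rewrite vscal_opp, vscal_1; reflexivity).
  rewrite Hs. ring.
Qed.

Lemma bl_bound {X : Banach} (f : X -> R) : bounded_linear f -> exists C, 0 <= C /\ forall u, Rabs (f u) <= C * vnorm u.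
Proof.
  intros [_ [_ [C HC]]]. exists (Rmax C 0). split. apply Rmax_r. intro u.
  eapply Rle_trans. apply HC. apply Rmult_le_compat_r. apply vnorm_ge0. apply Rmax_l.
Qed.

Lemma bl_list_bound {X : Banach} (fs : list (X -> R)) : Forall bounded_linear fs ->
  exists C, 0 <= C /\ forall f, In f fs -> forall u, Rabs (f u) <= C * vnorm u.
Proof.
  induction 1. exists 0. split. lra. intros f [].
  destruct IHForall as [C [HC1 HC2]]. destruct (bl_bound x H) as [C' [HC'1 HC'2]].
  exists (Rmax C C'). split. eapply Rle_trans; [apply HC1| apply Rmax_l]. intros f [<-|Hf] u.
  - eapply Rle_trans. apply HC'2. apply Rmult_le_compat_r. apply vnorm_ge0. apply Rmax_r.
  - eapply Rle_trans. apply HC2; auto. apply Rmult_le_compat_r. apply vnorm_ge0. apply Rmax_l.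
Qed.

Lemma weak_open_ext {X : Banach} (U V : X -> Prop) : weak_open U -> (forall w, U w <-> V w) -> weak_open V.
Proof.
  intros HU Hiff z Hz. apply Hiff in Hz. destruct (HU z Hz) as [fs [Hfs [d [Hd H]]]].
  exists fs. split; auto. exists d. split; auto. intros w Hw. apply Hiff. auto.
Qed.

Lemma weak_open_true {X : Banach} : weak_open (fun _ : X => True).
Proof. intros z _. exists []. split. constructor. exists 1. split. lra. auto. Qed.

Lemma weak_open_and {X : Banach} (U V : X -> Prop) : weak_open U -> weak_open V ->
  weak_open (fun w => U w /\ V w).
Proof.
  intros HU HV z [Hz1 Hz2]. destruct (HU z Hz1) as [fs1 [Hf1 [d1 [Hd1 H1]]]].
  destruct (HV z Hz2) as [fs2 [Hf2 [d2 [Hd2 H2]]]].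
  exists (fs1 ++ fs2). split. apply Forall_app; auto.
  exists (Rmin d1 d2). split. apply Rmin_glb_lt; auto.
  intros w Hw. split.
  - apply H1. intros f Hf. eapply Rlt_le_trans. apply Hw. apply in_or_app; auto. apply Rmin_l.
  - apply H2. intros f Hf. eapply Rlt_le_trans. apply Hw. apply in_or_app; auto. apply Rmin_r.
Qed.

Lemma weak_open_ball {X : Banach} (f : X -> R) (r d : R) : bounded_linear f ->
  weak_open (fun w => Rabs (f w - r) < d).
Proof.
  intros Hf z Hz. exists [f]. split. constructor; auto. exists (d - Rabs (f z - r)). split. lra.
  intros w Hw. specialize (Hw f (or_introl eq_refl)).
  replace (f w - r) with ((f w - f z) + (f z - r)) by ring.
  eapply Rle_lt_trans. apply Rabs_triang. lra.
Qed.

Lemma weak_open_list {X : Banach} (fs : list (X -> R)) (z : X) (d : R) : Forall bounded_linear fs ->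
  weak_open (fun w => forall f, In f fs -> Rabs (f w - f z) < d).
Proof.
  induction 1.
  - eapply weak_open_ext. apply weak_open_true. intro w; split; auto. intros _ f [].
  - eapply weak_open_ext. apply weak_open_and. apply (weak_open_ball x (x z) d H). apply IHForall.
    intro w; split.
    + intros [H1 H2] f [<-|Hf]; auto.
    + intro H1. split. apply H1; left; auto. intros f Hf. apply H1; right; auto.
Qed.

Lemma weak_open_coefs {X : Banach} {e : nat -> X} (He : schauder_basis e) (m : nat) (z : X) (d : R) :
  weak_open (fun w => forall j, (j < m)%nat -> Rabs (coef He j w - coef He j z) < d).
Proof.
  eapply weak_open_ext. apply (weak_open_list (map (coef He) (seq 0 m)) z d).
  { apply Forall_forall. intros f Hf. apply in_map_iff in Hf. destruct Hf as [j [<- _]].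
    apply coef_bounded_linear. }
  intro w. split.
  - intros H j Hj. apply H. apply in_map. apply in_seq. lia.
  - intros H f Hf. apply in_map_iff in Hf. destruct Hf as [j [<- Hj]]. apply in_seq in Hj.
    apply H. lia.
Qed.

Lemma P_norm_le {X : Banach} {e : nat -> X} (He : schauder_basis e) (m : nat) (z : X) :
  vnorm (P He m z) <= fold_right Rplus 0 (map (fun j => Rabs (coef He j z) * vnorm (e j)) (seq 0 m)).
Proof.
  unfold P, ps. eapply Rle_trans. apply vsum_norm. apply fold_Rplus_le. intros. rewrite vnorm_scal. lra.
Qed.
Open Scope nat_scope.
Lemma incr_nth_lt (l : list nat) i j : Defs.increasing l -> (i < j)%nat -> (j < length l)%nat ->
  (nth i l 0 < nth j l 0)%nat.
Proof.
  intros H Hij Hj. induction Hij.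
  - apply H; auto.
  - eapply Nat.lt_trans. apply IHHij; lia. apply H; auto.
Qed.

Lemma incr_nth_le (l : list nat) i j : Defs.increasing l -> (i <= j)%nat -> (j < length l)%nat ->
  (nth i l 0 <= nth j l 0)%nat.
Proof.
  intros H Hij Hj. destruct (Nat.eq_dec i j). subst; lia. pose proof (incr_nth_lt l i j H). lia.
Qed.

Lemma incr_cons h t : Defs.increasing (h :: t) -> Defs.increasing t /\ forall a, In a t -> (h < a)%nat.
Proof.
  intro H. split.
  - intros i Hi. apply (H (S i)). simpl. lia.
  - intros a Ha. apply (In_nth t a 0%nat) in Ha. destruct Ha as [n [Hn <-]].
    apply (incr_nth_lt (h :: t) 0%nat (S n) H). lia. simpl; lia.
Qed.

Lemma incr_firstn l j : Defs.increasing l -> Defs.increasing (firstn j l).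
Proof.
  intros H i Hi. rewrite length_firstn in Hi. rewrite !nth_firstn.
  destruct (Nat.ltb_spec i j); [|lia]. destruct (Nat.ltb_spec (S i) j); [|lia]. apply H. lia.
Qed.

Lemma in_firstn_in {A : Type} (a : A) j l : In a (firstn j l) -> In a l.
Proof. intro H. rewrite <- (firstn_skipn j l). apply in_or_app; auto. Qed.

Lemma incr_app_last u a : Defs.increasing (u ++ [a]) -> forall x, In x u -> (x < a)%nat.
Proof.
  intros H x Hx. apply (In_nth u x 0%nat) in Hx. destruct Hx as [n [Hn <-]].
  rewrite <- (app_nth1 u [a] 0%nat Hn). rewrite <- (nth_middle u [] a 0%nat) at 2.
  apply incr_nth_lt; auto. rewrite length_app; simpl; lia.
Qed.

Lemma incr_le_last l : Defs.increasing l -> forall x, In x l -> (x <= last l 0)%nat.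
Proof.
  intros H x Hx. assert (Hne : l <> []) by (intro; subst; inversion Hx).
  pose proof (app_removelast_last 0%nat Hne) as E. rewrite E in Hx, H. apply in_app_or in Hx.
  destruct Hx as [Hx|[<-|[]]]; [|lia]. pose proof (incr_app_last _ _ H x Hx). lia.
Qed.

Lemma last_firstn (s : list nat) j : (1 <= j)%nat -> (j <= length s)%nat ->
  last (firstn j s) 0 = nth (j - 1) s 0.
Proof.
  intros H1 H2. assert (Hne : firstn j s <> []).
  { intro Hc. apply (f_equal (@length nat)) in Hc. rewrite firstn_length_le in Hc; simpl in Hc; lia. }
  pose proof (app_removelast_last 0%nat Hne) as E.
  assert (Hl : length (firstn j s) = j) by (apply firstn_length_le; auto).
  assert (Hr : length (removelast (firstn j s)) = (j - 1)%nat).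
  { rewrite E in Hl. rewrite length_app in Hl. simpl in Hl. lia. }
  transitivity (nth (j - 1) (firstn j s) 0%nat).
  - rewrite E at 2. rewrite <- Hr, nth_middle. reflexivity.
  - rewrite nth_firstn. destruct (Nat.ltb_spec (j - 1) j); auto; lia.
Qed.

Lemma firstn_ne (s : list nat) j : (1 <= j)%nat -> (1 <= length s)%nat -> firstn j s <> [].
Proof. intros H1 H2 Hc. destruct j; [lia|]. destruct s; simpl in *; [lia|discriminate]. Qed.

Lemma split_agree (t t' : list nat) (N : nat) : Defs.increasing t -> Defs.increasing t' ->
  (forall a, In a t -> (a < N)%nat) -> agree_below N t t' ->
  t' = t ++ skipn (length t) t' /\ forall a, In a (skipn (length t) t') -> (N <= a)%nat.
Proof.
  revert t'. induction t as [|h t IH]; intros t' Ht Ht' HN Hag.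
  - simpl. split; auto. intros a Ha. destruct (Nat.lt_ge_cases a N) as [Hlt|]; auto.
    apply Hag in Hlt. apply Hlt in Ha. inversion Ha.
  - apply incr_cons in Ht. destruct Ht as [Ht Hth].
    assert (HhN : (h < N)%nat) by (apply HN; left; auto).
    assert (Hin : In h t') by (apply (Hag h HhN); left; auto).
    destruct t' as [|h' t'']; [inversion Hin|].
    apply incr_cons in Ht'. destruct Ht' as [Ht'' Hth'].
    assert (Hhh : h' = h).
    { destruct Hin as [|Hin]; auto.
      destruct (Nat.lt_ge_cases h' h).
      - assert (In h' (h :: t)) by (apply (Hag h' ltac:(lia)); left; auto).
        destruct H0 as [|H0]. lia. specialize (Hth h' H0). lia.
      - specialize (Hth' h Hin). lia. }
    subst h'.
    assert (Hag' : agree_below N t t'').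
    { intros n Hn. split.
      - intro Hnt. assert (In n (h :: t'')) by (apply (Hag n Hn); right; auto).
        destruct H as [<-|H]; auto. specialize (Hth h Hnt). lia.
      - intro Hnt. assert (In n (h :: t)) by (apply (Hag n Hn); right; auto).
        destruct H as [<-|H]; auto. specialize (Hth' h Hnt). lia. }
    destruct (IH t'' Ht Ht'' (fun a Ha => HN a (or_intror Ha)) Hag') as [E1 E2].
    simpl. split. rewrite E1 at 1. reflexivity. exact E2.
Qed.

Lemma bounded_max (B : nat) (R : nat -> nat -> Prop) :
  (forall h N N', (N <= N')%nat -> R h N -> R h N') ->
  (forall h, (h < B)%nat -> exists N, R h N) -> exists N, forall h, (h < B)%nat -> R h N.
Proof.
  intros Hmono H. induction B.
  - exists 0%nat. intros; lia.
  - destruct IHB as [N1 HN1]. intros; apply H; lia. destruct (H B ltac:(lia)) as [N2 HN2].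
    exists (max N1 N2). intros h Hh. destruct (Nat.eq_dec h B).
    + subst. eapply Hmono; [|eauto]. lia.
    + eapply Hmono; [|apply HN1; lia]. lia.
Qed.

Lemma unif_lists (K B : nat) (Q : list nat -> nat -> Prop) :
  (forall t, (length t <= K)%nat -> (forall a, In a t -> (a < B)%nat) -> exists N, forall n, (N <= n)%nat -> Q t n) ->
  exists N, forall t, (length t <= K)%nat -> (forall a, In a t -> (a < B)%nat) -> forall n, (N <= n)%nat -> Q t n.
Proof.
  revert Q. induction K; intros Q H.
  - destruct (H [] ltac:(simpl; lia) ltac:(intros a [])) as [N HN]. exists N.
    intros t Ht _ n Hn. destruct t; [|simpl in Ht; lia]. auto.
  - destruct (H [] ltac:(simpl; lia) ltac:(intros a [])) as [N0 HN0].
    destruct (bounded_max B (fun h N => forall t, (length t <= K)%nat -> (forall a, In a t -> (a < B)%nat) ->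
        forall n, (N <= n)%nat -> Q (h :: t) n)) as [N1 HN1].
    + intros h N N' HNN' HR t Ht Hb n Hn. apply HR; auto; lia.
    + intros h Hh. apply (IHK (fun t n => Q (h :: t) n)). intros t Ht Hb.
      apply H. simpl; lia. intros a [<-|Ha]; auto.
    + exists (max N0 N1). intros t Ht Hb n Hn. destruct t as [|h t].
      * apply HN0; lia.
      * apply HN1. apply Hb; left; auto. simpl in Ht; lia. intros a Ha; apply Hb; right; auto. lia.
Qed.

Lemma telescope {X : Banach} (phi : list nat -> X) (t : list nat) :
  vsum (map (fun j => match firstn j t with [] => phi [] | u => vsub (phi u) (phi (removelast u)) end)
            (seq 0 (S (length t)))) = phi t.
Proof.
  induction t as [|a t IH] using rev_ind.
  - simpl. apply vadd_0r.
  - rewrite length_app. simpl (length [a]). replace (S (length t + 1)) with (S (S (length t))) by lia.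
    rewrite vsum_seq_S.
    rewrite (vsum_map_ext _ (fun j => match firstn j t with [] => phi [] | u => vsub (phi u) (phi (removelast u)) end)).
    + rewrite IH. simpl (0 + S (length t))%nat. rewrite firstn_all2 by (rewrite length_app; simpl; lia).
      destruct (t ++ [a]) eqn:E. destruct t; discriminate. rewrite <- E. cbv zeta. rewrite removelast_last.
      apply vadd_sub.
    + intros j Hj. apply in_seq in Hj. rewrite firstn_app. replace (j - length t)%nat with 0%nat by lia.
      simpl. rewrite app_nil_r. reflexivity.
Qed.
Open Scope R_scope.
Lemma ps_trunc {X : Banach} {e : nat -> X} (He : schauder_basis e) (z : X) m n : (m <= n)%nat ->
  ps e (fun j => if Nat.ltb j m then coef He j z else 0) n = P He m z.
Proof.
  induction 1.
  - unfold P. apply ps_ext. intros i Hi. destruct (Nat.ltb_spec i m); auto; lia.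
  - rewrite ps_S, IHle. destruct (Nat.ltb_spec m0 m); [lia|]. rewrite vscal_0. apply vadd_0r.
Qed.

Lemma Pdiff_supp {X : Banach} {e : nat -> X} (He : schauder_basis e) (z : X) m0 m1 :
  (m0 <= m1)%nat -> forall n, in_supp e (vsub (P He m1 z) (P He m0 z)) n -> (m0 <= n < m1)%nat.
Proof.
  intros Hm n [a [Ha Han]].
  set (a' := fun j => (if Nat.ltb j m1 then coef He j z else 0) + (- (1)) * (if Nat.ltb j m0 then coef He j z else 0)).
  assert (Ha' : expands e a' (vsub (P He m1 z) (P He m0 z))).
  { intros eps Heps. exists m1. intros n' Hn'. fold (ps e a' n'). unfold a'.
    rewrite ps_add, ps_scal, !ps_trunc by lia. rewrite vscal_opp, vscal_1. fold (vsub (P He m1 z) (P He m0 z)).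
    rewrite vsub_diag, vnorm_0. auto. }
  pose proof (proj2 He _ _ _ Ha Ha' n) as E. unfold a' in E.
  destruct (Nat.ltb_spec n m1); destruct (Nat.ltb_spec n m0); try lia; exfalso; apply Han; rewrite E; ring.
Qed.
From Stdlib Require Import ClassicalEpsilon.

Theorem mainTheorem5 (X : Banach) (e : nat -> X) (He : schauder_basis e)
  (k : nat) (Hk : (1 <= k)%nat) (x : list nat -> X)
  (eps : nat -> R) (Heps_pos : forall n, 0 < eps n) (Heps_null : Un_cv eps 0)
  (M : nat -> nat) (HM : infinite_enum M)
  (phi : list nat -> X) (Hphi : subordinating_map M k x phi) :
  exists L : nat -> nat,
    infinite_enum L /\ (forall n, memb M (L n)) /\
    exists (xt : list nat -> X) (y : list nat -> X),
      canonical_tree_decomposition e L k xt y /\ y [] = phi [] /\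
      (forall s n, in_subsets_eq L k s -> hd 0%nat s = L n ->
         vnorm (vsub (x s) (xt s)) < eps n) /\
      exists psi : list nat -> X, subordinating_map L k xt psi /\ psi [] = phi [].
Proof.
  destruct Hphi as [Hcont Hphix].
  assert (HMge : forall j, (j <= M j)%nat).
  { induction j. lia. specialize (HM j). lia. }
  set (epsmin := fix f (i : nat) : R := match i with O => eps 0%nat | S i => Rmin (f i) (eps (S i)) end).
  assert (Hem_pos : forall i, 0 < epsmin i).
  { induction i; simpl. auto. apply Rmin_glb_lt; auto. }
  assert (Hem_le : forall i n, (n <= i)%nat -> epsmin i <= eps n).
  { induction i; intros n Hn.
    - replace n with 0%nat by lia. simpl. lra.
    - destruct (Nat.eq_dec n (S i)). subst. simpl. apply Rmin_r.
      simpl. eapply Rle_trans. apply Rmin_l. apply IHi. lia. }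
  assert (Hk1 : 1 <= INR k) by (apply (le_INR 1); auto).
  set (tau := fun i => Rmin (epsmin i) (/ (INR i + 1)) / (2 * INR k + 2)).
  assert (Htau_pos : forall i, 0 < tau i).
  { intro i. unfold tau. apply Rdiv_lt_0_compat; [|lra]. apply Rmin_glb_lt; auto.
    apply Rinv_0_lt_compat. pose proof (pos_INR i). lra. }
  assert (Htau_eps : forall i n, (n <= i)%nat -> tau i * (INR k + 1) <= eps n / 2).
  { intros i n Hn. unfold tau. pose proof (Rmin_l (epsmin i) (/ (INR i + 1))).
    pose proof (Hem_le i n Hn).
    replace (Rmin (epsmin i) (/ (INR i + 1)) / (2 * INR k + 2) * (INR k + 1))
      with (Rmin (epsmin i) (/ (INR i + 1)) / 2) by (field; lra). lra. }
  assert (Htau_inv : forall i, tau i <= / (INR i + 1)).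
  { intro i. unfold tau. pose proof (Rmin_r (epsmin i) (/ (INR i + 1))).
    assert (Hi1 : 0 < INR i + 1) by (pose proof (pos_INR i); lra).
    pose proof (Rmin_glb_lt (epsmin i) (/ (INR i + 1)) 0 (Hem_pos i) (Rinv_0_lt_compat _ Hi1)).
    apply Rmult_le_reg_r with (2 * INR k + 2); [lra|].
    replace (Rmin (epsmin i) (/ (INR i + 1)) / (2 * INR k + 2) * (2 * INR k + 2))
      with (Rmin (epsmin i) (/ (INR i + 1))) by (field; lra).
    assert (0 < / (INR i + 1)) by (apply Rinv_0_lt_compat; pose proof (pos_INR i); lra). nra. }
  assert (Hstage : forall (i : nat) (p : nat * nat), exists q : nat * nat,
     (fst p <= fst q)%nat /\ memb M (fst q) /\ (snd p <= snd q)%nat /\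
     (forall u, (length u <= k)%nat -> (forall a, In a u -> (a < fst p)%nat) ->
        in_subsets_le M k (u ++ [fst q]) ->
        vnorm (P He (snd p) (vsub (phi (u ++ [fst q])) (phi u))) < tau i / 2) /\
     (forall t, (length t <= k)%nat -> (forall a, In a t -> (a < S (fst q))%nat) ->
        vnorm (vsub (vsub (phi t) (phi (removelast t)))
                    (P He (snd q) (vsub (phi t) (phi (removelast t))))) < tau i / 2)).
  { intros i [b m0]. simpl.
    set (E0 := fold_right Rplus 0 (map (fun j => vnorm (e j)) (seq 0 m0))).
    assert (HE0 : 0 <= E0) by (apply fold_Rplus_nonneg; intro; apply vnorm_ge0).
    set (d := (tau i / 2) / (E0 + 1)).
    assert (Hd : 0 < d) by (unfold d; apply Rdiv_lt_0_compat; [pose proof (Htau_pos i); lra| lra]).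
    destruct (unif_lists k b (fun u n => in_subsets_le M k u -> forall l, (n <= l)%nat ->
         in_subsets_le M k (u ++ [l]) ->
         vnorm (P He m0 (vsub (phi (u ++ [l])) (phi u))) < tau i / 2)) as [N1 HN1].
    { intros u _ _. destruct (classic (in_subsets_le M k u)) as [Hu|Hu].
      - set (U := fun w => forall j, (j < m0)%nat -> Rabs (coef He j w - coef He j (phi u)) < d).
        destruct (Hcont u Hu U (weak_open_coefs He m0 (phi u) d)) as [N HN].
        { intros j _. unfold Rminus. rewrite Rplus_opp_r, Rabs_R0. auto. }
        exists N. intros n Hn _ l Hl Hul.
        assert (HU : U (phi (u ++ [l]))).
        { apply HN; auto. intros q Hq. split; intro Hq2.
          - apply in_or_app; auto.
          - apply in_app_or in Hq2. destruct Hq2 as [|[<-|[]]]; auto. lia. }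
        eapply Rle_lt_trans. apply P_norm_le.
        eapply Rle_lt_trans. apply (fold_Rplus_le _ (fun j => d * vnorm (e j))).
        { intros j Hj. apply in_seq in Hj. rewrite coef_sub.
          apply Rmult_le_compat_r. apply vnorm_ge0. left. apply HU. lia. }
        rewrite fold_Rplus_scal. fold E0. unfold d.
        pose proof (Htau_pos i).
        apply Rmult_lt_reg_r with (E0 + 1); [lra|].
        replace (tau i / 2 / (E0 + 1) * E0 * (E0 + 1)) with (tau i / 2 * E0) by (field; lra). nra.
      - exists 0%nat. intros. contradiction. }
    destruct (unif_lists k (S (M (max N1 b))) (fun t n =>
        vnorm (vsub (vsub (phi t) (phi (removelast t)))
                    (P He n (vsub (phi t) (phi (removelast t))))) < tau i / 2)) as [N2 HN2].
    { intros t _ _. destruct (P_cv He (vsub (phi t) (phi (removelast t))) (tau i / 2)) as [N HN].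
      pose proof (Htau_pos i); lra. exists N. intros n Hn. rewrite vnorm_sub_sym. auto. }
    exists (M (max N1 b), max m0 N2). simpl. split; [|split; [|split; [|split]]].
    - pose proof (HMge (max N1 b)). lia.
    - exists (max N1 b). reflexivity.
    - lia.
    - intros u Hlu Hub Hul. apply (HN1 u Hlu Hub N1 (le_n _)); auto.
      + destruct Hul as [Hl1 [Hl2 Hl3]]. split; [|split].
        * rewrite length_app in Hl1. lia.
        * replace u with (firstn (length u) (u ++ [M (max N1 b)])).
          apply incr_firstn; auto. rewrite firstn_app, Nat.sub_diag. simpl. rewrite app_nil_r. apply firstn_all.
        * intros a Ha. apply Hl3. apply in_or_app; auto.
      + pose proof (HMge (max N1 b)). lia.
    - intros t Ht Hb. apply HN2; auto. lia. }

  destruct (functional_choice (fun (ip : nat * (nat * nat)) (q : nat * nat) =>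
     (fst (snd ip) <= fst q)%nat /\ memb M (fst q) /\ (snd (snd ip) <= snd q)%nat /\
     (forall u, (length u <= k)%nat -> (forall a, In a u -> (a < fst (snd ip))%nat) ->
        in_subsets_le M k (u ++ [fst q]) ->
        vnorm (P He (snd (snd ip)) (vsub (phi (u ++ [fst q])) (phi u))) < tau (fst ip) / 2) /\
     (forall t, (length t <= k)%nat -> (forall a, In a t -> (a < S (fst q))%nat) ->
        vnorm (vsub (vsub (phi t) (phi (removelast t)))
                    (P He (snd q) (vsub (phi t) (phi (removelast t))))) < tau (fst ip) / 2)))
    as [F HF].
  { intros [i p]. apply Hstage. }
  clear Hstage.
  set (st := fix st (i : nat) : nat * nat := match i with
              | O => (0%nat, 0%nat)
              | S i => (S (fst (F (i, st i))), snd (F (i, st i))) end).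
  set (L := fun i => fst (F (i, st i))).
  set (mm := fun i => snd (F (i, st i))).
  set (mp := fun i => snd (st i)).
  assert (HstS : forall i, st (S i) = (S (L i), mm i)) by reflexivity.
  assert (HLinc : infinite_enum L).
  { intro i. destruct (HF (S i, st (S i))) as [H1 _]. change (fst (st (S i)) <= L (S i))%nat in H1.
    rewrite HstS in H1. simpl in H1. lia. }
  assert (HLmono : forall i j, (i < j)%nat -> (L i < L j)%nat).
  { intros i j Hij. induction Hij. apply HLinc. specialize (HLinc m). lia. }
  assert (HLmono_inv : forall i j, (L i < L j)%nat -> (i < j)%nat).
  { intros i j H. destruct (Nat.lt_ge_cases i j); auto. destruct (Nat.eq_dec i j). subst; lia.
    assert (j < i)%nat by lia. specialize (HLmono j i H1). lia. }
  assert (HLmono_inv2 : forall i j, (L i <= L j)%nat -> (i <= j)%nat).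
  { intros i j H. destruct (Nat.le_gt_cases i j); auto. specialize (HLmono j i H0). lia. }
  assert (HLM : forall n, memb M (L n)).
  { intro n. destruct (HF (n, st n)) as [_ [H _]]. exact H. }
  assert (Hmp_mm : forall i, (mp i <= mm i)%nat).
  { intro i. destruct (HF (i, st i)) as [_ [_ [H _]]]. exact H. }
  assert (Hmm_mp : forall i j, (i < j)%nat -> (mm i <= mp j)%nat).
  { intros i j Hij. induction Hij.
    - unfold mp. rewrite HstS. simpl. lia.
    - specialize (Hmp_mm m). unfold mp in *. rewrite HstS. simpl. lia. }
  assert (Hbnd : forall i a, memb L a -> (a < L i)%nat -> (a < fst (st i))%nat).
  { intros i a [j <-] Hji. apply HLmono_inv in Hji. destruct i. lia.
    rewrite HstS. simpl. destruct (Nat.eq_dec j i). subst; lia.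
    specialize (HLmono j i ltac:(lia)). lia. }
  assert (HLsubM : forall a, memb L a -> memb M a).
  { intros a [n <-]. apply HLM. }
  set (idx := fun a => epsilon (inhabits 0%nat) (fun i => L i = a)).
  assert (Hidx : forall a, memb L a -> L (idx a) = a).
  { intros a Ha. unfold idx. apply (epsilon_spec (inhabits 0%nat) (fun i => L i = a)). exact Ha. }

  set (D := fun t : list nat => vsub (phi t) (phi (removelast t))).
  set (err := fun t : list nat => match t with [] => vzero | _ =>
      vadd (vsub (D t) (P He (mm (idx (last t 0%nat))) (D t))) (P He (mp (idx (last t 0%nat))) (D t)) end).
  assert (Herr_ne : forall t, t <> [] -> err t =
      vadd (vsub (D t) (P He (mm (idx (last t 0%nat))) (D t))) (P He (mp (idx (last t 0%nat))) (D t))).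
  { intros [|a t] H; [congruence|reflexivity]. }
  assert (Hlast_in : forall t : list nat, t <> [] -> In (last t 0%nat) t).
  { intros t Ht. rewrite (app_removelast_last 0%nat Ht) at 2. apply in_or_app. right; left; auto. }
  assert (Herr : forall t, in_subsets_le L k t -> t <> [] -> vnorm (err t) < tau (idx (last t 0%nat))).
  { intros t Ht Hne. pose proof Ht as [Hl [Hinc Hmem]].
    set (i := idx (last t 0%nat)).
    assert (HLi : L i = last t 0%nat) by (apply Hidx, Hmem, Hlast_in, Hne).
    assert (Et : t = removelast t ++ [L i]) by (rewrite HLi; apply app_removelast_last; auto).
    destruct (HF (i, st i)) as [_ [_ [_ [Hhead Htail]]]]. cbn [fst snd] in Hhead, Htail.
    change (fst (F (i, st i))) with (L i) in Hhead, Htail.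
    change (snd (F (i, st i))) with (mm i) in Htail. change (snd (st i)) with (mp i) in Hhead.
    rewrite Herr_ne by auto. fold i. eapply Rle_lt_trans. apply vnorm_triangle.
    assert (H1 : vnorm (vsub (D t) (P He (mm i) (D t))) < tau i / 2).
    { apply Htail; auto. intros a Ha. pose proof (incr_le_last t Hinc a Ha). lia. }
    assert (H2 : vnorm (P He (mp i) (D t)) < tau i / 2).
    { assert (HD : D t = vsub (phi (removelast t ++ [L i])) (phi (removelast t))).
      { unfold D. rewrite <- Et. reflexivity. }
      rewrite HD. apply Hhead.
      - rewrite Et, length_app in Hl. simpl in Hl. lia.
      - intros a Ha. apply Hbnd. apply Hmem. rewrite Et. apply in_or_app; auto.
        rewrite Et in Hinc. apply (incr_app_last _ _ Hinc a Ha).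
      - rewrite <- Et. split; [|split]; auto. }
    lra. }

  set (Dp := fun u : list nat => match u with [] => phi [] | u => vsub (phi u) (phi (removelast u)) end).
  set (y := fun t => vsub (Dp t) (err t)).
  set (psi := fun t => vsum (map (fun j => y (restr t j)) (seq 0 (S (length t))))).
  set (Serr := fun t => vsum (map (fun j => err (firstn j t)) (seq 0 (S (length t))))).
  assert (Hpsi : forall t, psi t = vsub (phi t) (Serr t)).
  { intro t. unfold psi, y, restr, Serr. rewrite vsum_map_sub. f_equal. etransitivity; [|apply (telescope phi t)].
    apply vsum_map_ext. intros j _. unfold Dp. destruct (firstn j t); reflexivity. }
  assert (Hy0 : y [] = phi []) by (unfold y; simpl; apply vsub_0r).
  assert (Hy_ne : forall t, t <> [] -> y t =
     vsub (P He (mm (idx (last t 0%nat))) (D t)) (P He (mp (idx (last t 0%nat))) (D t))).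
  { intros t Ht. unfold y. rewrite Herr_ne by auto.
    assert (Dp t = D t) as -> by (destruct t; [congruence|reflexivity]). apply vsub_err. }
  assert (Hsupp : forall t, t <> [] -> forall n, in_supp e (y t) n ->
      (mp (idx (last t 0%nat)) <= n < mm (idx (last t 0%nat)))%nat).
  { intros t Ht n Hn. rewrite Hy_ne in Hn by auto. eapply Pdiff_supp; eauto. }
  assert (Hsupp_lt : forall t1 t2, t1 <> [] -> t2 <> [] -> memb L (last t1 0%nat) -> memb L (last t2 0%nat) ->
      (last t1 0%nat < last t2 0%nat)%nat -> supp_lt e (y t1) (y t2)).
  { intros t1 t2 H1 H2 H3 H4 H5 m n Hm Hn. apply Hsupp in Hm; auto. apply Hsupp in Hn; auto.
    rewrite <- (Hidx _ H3), <- (Hidx _ H4) in H5. apply HLmono_inv in H5.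
    pose proof (Hmm_mp _ _ H5). lia. }
  assert (Hrl : forall s j, in_subsets_eq L k s -> (1 <= j <= k)%nat ->
      restr s j <> [] /\ last (restr s j) 0%nat = nth (j - 1) s 0%nat /\ memb L (nth (j - 1) s 0%nat)).
  { intros s j [Hl [Hinc Hmem]] Hj. unfold restr. split; [|split].
    - apply firstn_ne; lia.
    - apply last_firstn; lia.
    - apply Hmem. apply nth_In. lia. }
  exists L. split; [exact HLinc|]. split; [exact HLM|]. exists psi, y.
  split; [|split; [exact Hy0|split]].
  -
    split; [|split; [|split; [|split]]].
    + intros s [Hl _]. unfold psi. rewrite Hl. reflexivity.
    + intros t Ht Hne. exists (mm (idx (last t 0%nat))). intros n Hn. apply Hsupp in Hn; auto. lia.
    + intros s j1 j2 Hs H1 H12 H2.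
      destruct (Hrl s j1 Hs ltac:(lia)) as [A1 [A2 A3]]. destruct (Hrl s j2 Hs ltac:(lia)) as [B1 [B2 B3]].
      apply Hsupp_lt; auto; try congruence. rewrite A2, B2. destruct Hs as [Hl [Hinc _]].
      apply incr_nth_lt; auto; lia.
    + intros s1 s2 j1 j2 Hp H1 H12 H2. pose proof Hp as [Hs1 [Hs2 [Hp1 Hp2]]].
      destruct (Hrl s1 j1 Hs1 ltac:(lia)) as [A1 [A2 A3]]. destruct (Hrl s2 j2 Hs2 ltac:(lia)) as [B1 [B2 B3]].
      apply Hsupp_lt; auto; try congruence. rewrite A2, B2. destruct Hs2 as [Hl [Hinc _]].
      specialize (Hp1 (j1 - 1)%nat ltac:(lia)). pose proof (incr_nth_le s2 (j1 - 1) (j2 - 1) Hinc ltac:(lia) ltac:(lia)). lia.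
    + intros s1 s2 j1 j2 Hp H1 H12 H2. pose proof Hp as [Hs1 [Hs2 [Hp1 Hp2]]].
      destruct (Hrl s2 j1 Hs2 ltac:(lia)) as [A1 [A2 A3]]. destruct (Hrl s1 j2 Hs1 ltac:(lia)) as [B1 [B2 B3]].
      apply Hsupp_lt; auto; try congruence. rewrite A2, B2. destruct Hs1 as [Hl [Hinc _]].
      specialize (Hp2 (j1 - 1)%nat ltac:(lia)). replace (S (j1 - 1)) with j1 in Hp2 by lia.
      pose proof (incr_nth_le s1 j1 (j2 - 1) Hinc ltac:(lia) ltac:(lia)). lia.
  -
    intros s n Hs Hhd. pose proof Hs as [Hl [Hinc Hmem]].
    assert (Hs_M : in_subsets_eq M k s) by (split; [|split]; auto).
    rewrite <- (Hphix s Hs_M), Hpsi, vsub_sub_self. unfold Serr. rewrite Hl.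
    eapply Rle_lt_trans. apply vsum_norm.
    eapply Rle_lt_trans. apply (fold_Rplus_le _ (fun _ => eps n / (2 * (INR k + 1)))).
    { intros j Hj. apply in_seq in Hj.
      assert (Hpos : 0 < eps n / (2 * (INR k + 1))) by (apply Rdiv_lt_0_compat; auto; lra).
      destruct (Nat.eq_dec j 0) as [->|Hj0].
      { simpl. rewrite vnorm_0. lra. }
      assert (Ht : in_subsets_le L k (firstn j s)).
      { split; [|split].
        - rewrite length_firstn. lia.
        - apply incr_firstn; auto.
        - intros a Ha. apply Hmem. eapply in_firstn_in; eauto. }
      assert (Hne : firstn j s <> []) by (apply firstn_ne; lia).
      pose proof (Herr _ Ht Hne) as He1.
      rewrite last_firstn in He1 by lia.
      set (i := idx (nth (j - 1) s 0%nat)) in He1.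
      assert (HLi : L i = nth (j - 1) s 0%nat) by (apply Hidx, Hmem, nth_In; lia).
      assert (Hni : (n <= i)%nat).
      { apply HLmono_inv2. rewrite HLi, <- Hhd. destruct s as [|s0 s']; [simpl in Hl; lia|].
        simpl hd. exact (incr_nth_le (s0 :: s') 0 (j - 1) Hinc ltac:(lia) ltac:(simpl in *; lia)). }
      pose proof (Htau_eps i n Hni).
      assert (tau i <= eps n / (2 * (INR k + 1))).
      { apply Rmult_le_reg_r with (INR k + 1). lra.
        replace (eps n / (2 * (INR k + 1)) * (INR k + 1)) with (eps n / 2) by (field; lra). lra. }
      lra. }
    rewrite fold_Rplus_const, length_seq, S_INR.
    replace ((INR k + 1) * (eps n / (2 * (INR k + 1)))) with (eps n / 2) by (field; lra).
    pose proof (Heps_pos n). lra.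
  - exists psi. split; [split|].
    + intros t Ht U HU HUt.
      destruct (HU _ HUt) as [fs [Hfs [dl [Hdl HUd]]]].
      destruct (bl_list_bound fs Hfs) as [C [HC0 HC]].
      pose proof Ht as [Hl [Hinc Hmem]].
      assert (Ht_M : in_subsets_le M k t) by (split; [|split]; auto).
      set (V := fun w => forall f, In f fs -> Rabs (f w - f (phi t)) < dl / 2).
      destruct (Hcont t Ht_M V (weak_open_list fs (phi t) (dl/2) Hfs)) as [N1 HN1].
      { intros f _. unfold Rminus. rewrite Rplus_opp_r, Rabs_R0. lra. }
      destruct (INR_unbounded ((INR k + 1) * (C + 1) * 2 / dl)) as [I0 HI0].
      set (N := max N1 (max (S (list_max t)) (L I0))).
      exists N. intros t' Ht' Hag.
      pose proof Ht' as [Hl' [Hinc' Hmem']].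
      assert (Ht'_M : in_subsets_le M k t') by (split; [|split]; auto).
      assert (Hlt : forall a, In a t -> (a < N)%nat).
      { intros a Ha. pose proof (proj1 (list_max_le t (list_max t)) (le_n _)) as HF1.
        rewrite Forall_forall in HF1. specialize (HF1 a Ha). unfold N. lia. }
      destruct (split_agree t t' N Hinc Hinc' Hlt Hag) as [E1 E2].
      set (w := skipn (length t) t') in *.
      assert (Hlen : length t' = (length t + length w)%nat) by (rewrite E1 at 1; apply length_app).
      set (Ex := vsum (map (fun j => err (firstn j t')) (seq (S (length t)) (length t' - length t)))).
      assert (HSerr : Serr t' = vadd (Serr t) Ex).
      { unfold Serr, Ex. replace (S (length t')) with (S (length t) + (length t' - length t))%nat by lia.
        rewrite seq_app, map_app, vsum_app. f_equal. apply vsum_map_ext. intros j Hj. apply in_seq in Hj.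
        rewrite E1, firstn_app. replace (j - length t)%nat with 0%nat by lia. simpl. rewrite app_nil_r.
        reflexivity. }
      assert (HI0pos : 0 < INR I0 + 1) by (pose proof (pos_INR I0); lra).
      assert (HEx : vnorm Ex <= INR k * / (INR I0 + 1)).
      { unfold Ex. eapply Rle_trans. apply vsum_norm.
        eapply Rle_trans. apply (fold_Rplus_le _ (fun _ => / (INR I0 + 1))).
        { intros j Hj. apply in_seq in Hj.
          assert (Hj1 : (1 <= j <= length t')%nat) by lia.
          assert (Htj : in_subsets_le L k (firstn j t')).
          { split; [|split].
            - rewrite length_firstn. lia.
            - apply incr_firstn; auto.
            - intros a Ha. apply Hmem'. eapply in_firstn_in; eauto. }
          assert (Hne : firstn j t' <> []) by (apply firstn_ne; lia).
          pose proof (Herr _ Htj Hne) as He1. rewrite last_firstn in He1 by lia.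
          set (i := idx (nth (j - 1) t' 0%nat)) in He1.
          assert (HLi : L i = nth (j - 1) t' 0%nat) by (apply Hidx, Hmem', nth_In; lia).
          assert (HNle : (N <= nth (j - 1) t' 0%nat)%nat).
          { apply E2. assert (nth (j - 1) t' 0%nat = nth (j - 1 - length t) w 0%nat) as ->.
            { rewrite E1 at 1. apply app_nth2. lia. }
            apply nth_In. lia. }
          assert (HIi : (I0 <= i)%nat) by (apply HLmono_inv2; rewrite HLi; unfold N in HNle; lia).
          pose proof (Htau_inv i). apply le_INR in HIi.
          assert (/ (INR i + 1) <= / (INR I0 + 1)) by (apply Rinv_le_contravar; lra).
          lra. }
        rewrite fold_Rplus_const, length_seq.
        apply Rmult_le_compat_r. left; apply Rinv_0_lt_compat; auto.
        apply le_INR. lia. }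
      apply HUd. intros f Hf.
      assert (Hbl : bounded_linear f) by (rewrite Forall_forall in Hfs; auto).
      rewrite !Hpsi, HSerr, !(bl_sub f _ _ Hbl). destruct Hbl as [Hadd _]. rewrite Hadd.
      assert (H1 : Rabs (f (phi t') - f (phi t)) < dl / 2).
      { apply (HN1 t' Ht'_M). intros q Hq. apply Hag. unfold N. lia. exact Hf. }
      assert (H2 : Rabs (f Ex) < dl / 2).
      { eapply Rle_lt_trans. apply HC; auto.
        assert (HI1 : INR I0 * dl > (INR k + 1) * (C + 1) * 2).
        { apply Rmult_gt_compat_r with (r := dl) in HI0; auto.
          replace ((INR k + 1) * (C + 1) * 2 / dl * dl) with ((INR k + 1) * (C + 1) * 2) in HI0 by (field; lra).
          lra. }
        apply Rle_lt_trans with (C * (INR k * / (INR I0 + 1))).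
        { apply Rmult_le_compat_l; auto. }
        apply Rmult_lt_reg_r with (INR I0 + 1); auto.
        replace (C * (INR k * / (INR I0 + 1)) * (INR I0 + 1)) with (C * INR k) by (field; lra).
        pose proof (pos_INR I0). nra. }
      replace (f (phi t') - (f (Serr t) + f Ex) - (f (phi t) - f (Serr t)))
        with ((f (phi t') - f (phi t)) + - f Ex) by ring.
      eapply Rle_lt_trans. apply Rabs_triang. rewrite Rabs_Ropp. lra.
    + intros s _. reflexivity.
    + unfold psi. cbn [length seq map vsum fold_right restr firstn]. rewrite vadd_0r. exact Hy0.
Qed.
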